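(* Let $(X,f)$, $(Y,g)$ be dynamical systems, $t\in\mathbb N$, and $\pi\colon(X,f)\to(Y,g)$ a factor map with $\#\pi^{-1}(y)\le t$ for every $y\in Y$. Let $S\subset X$ be an uncountable syndetically scrambled set for $f$ such that for every collection $x_1,\dots,x_{t+1}$ of $t+1$ distinct points of $S$ there are $\varepsilon>0$ and an infinite set $M\subset\mathbb N$ with $d(f^n(x_i),f^n(x_j))\ge\varepsilon$ for all $n\in M$ and all $1\le i<j\le t+1$. Then $\pi(S)$ contains an uncountable syndetically scrambled set for $g$. If $S$ is a Cantor set, then $\pi(S)$ contains a Cantor syndetically scrambled set for $g$.
   Context: Dynamical system: compact metric space with continuous self-map. Factor map: continuous surjection $\pi$ with $\pi\circ f=g\circ\pi$. Syndetic: subset of $\mathbb N$ meeting every set with arbitrarily long runs of consecutive integers. $\mathrm{Asy}(f)=\{(x,y):d(f^nx,f^ny)\to0\}$, $\mathrm{SProx}(f)=\{(x,y):\{n:d(f^nx,f^ny)<\eta\}$ syndetic for all $\eta>0\}$ (likewise for $g$). A syndetically scrambled set has at least two points and all pairs of distinct points in $\mathrm{SProx}\setminus\mathrm{Asy}$. Cantor set: nonempty compact perfect totally disconnected. *)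

(* Defs.v *)
From Stdlib Require Import Reals List.
Import ListNotations.
Open Scope R_scope.

Section Metric.
Context {X : Type} (d : X -> X -> R).

Definition is_metric : Prop :=
  (forall x y, 0 <= d x y) /\
  (forall x y, d x y = 0 <-> x = y) /\
  (forall x y, d x y = d y x) /\
  (forall x y z, d x z <= d x y + d y z).

Definition open_set (U : X -> Prop) : Prop :=
  forall x, U x -> exists r, 0 < r /\ forall y, d x y < r -> U y.

Definition compact_subset (K : X -> Prop) : Prop :=
  forall (I : Type) (U : I -> X -> Prop),
    (forall i, open_set (U i)) ->
    (forall x, K x -> exists i, U i x) ->
    exists l : list I, forall x, K x -> exists i, In i l /\ U i x.

Definition compact_space : Prop := compact_subset (fun _ => True).

Definition connected_subset (C : X -> Prop) : Prop :=
  ~ exists U V : X -> Prop,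
      open_set U /\ open_set V /\
      (forall x, C x -> U x \/ V x) /\
      (exists x, C x /\ U x) /\ (exists x, C x /\ V x) /\
      (forall x, C x -> U x -> V x -> False).

Definition perfect_subset (S : X -> Prop) : Prop :=
  forall x, S x -> forall eps, 0 < eps -> exists y, S y /\ y <> x /\ d x y < eps.

Definition totally_disconnected_subset (S : X -> Prop) : Prop :=
  forall C : X -> Prop, (forall x, C x -> S x) -> connected_subset C ->
    forall x y, C x -> C y -> x = y.

Definition cantor_subset (S : X -> Prop) : Prop :=
  (exists x, S x) /\ compact_subset S /\ perfect_subset S /\
  totally_disconnected_subset S.

End Metric.

Definition continuous_map {X Y : Type} (dX : X -> X -> R) (dY : Y -> Y -> R)
  (h : X -> Y) : Prop :=
  forall x eps, 0 < eps -> exists delta, 0 < delta /\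
    forall x', dX x x' < delta -> dY (h x) (h x') < eps.

Definition factor_map {X Y : Type} (dX : X -> X -> R) (dY : Y -> Y -> R)
  (f : X -> X) (g : Y -> Y) (p : X -> Y) : Prop :=
  continuous_map dX dY p /\ (forall y, exists x, p x = y) /\
  (forall x, p (f x) = g (p x)).

Definition countable_subset {X : Type} (S : X -> Prop) : Prop :=
  exists h : X -> nat, forall x y, S x -> S y -> h x = h y -> x = y.

Definition uncountable_subset {X : Type} (S : X -> Prop) : Prop :=
  ~ countable_subset S.

Definition thick (B : nat -> Prop) : Prop :=
  forall L : nat, exists m : nat, forall k, (k < L)%nat -> B (m + k)%nat.

Definition syndetic (A : nat -> Prop) : Prop :=
  forall B, thick B -> exists n, A n /\ B n.

Definition infinite_nat_set (M : nat -> Prop) : Prop :=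
  forall N : nat, exists n, (N <= n)%nat /\ M n.

Definition Asy {X : Type} (d : X -> X -> R) (f : X -> X) (x y : X) : Prop :=
  forall eps, 0 < eps -> exists N : nat, forall n, (N <= n)%nat ->
    d (Nat.iter n f x) (Nat.iter n f y) < eps.

Definition SProx {X : Type} (d : X -> X -> R) (f : X -> X) (x y : X) : Prop :=
  forall eta, 0 < eta ->
    syndetic (fun n => d (Nat.iter n f x) (Nat.iter n f y) < eta).

Definition synd_scrambled {X : Type} (d : X -> X -> R) (f : X -> X)
  (S : X -> Prop) : Prop :=
  (exists x y, S x /\ S y /\ x <> y) /\
  (forall x y, S x -> S y -> x <> y -> SProx d f x y /\ ~ Asy d f x y).

Definition fibers_bounded {X Y : Type} (p : X -> Y) (t : nat) : Prop :=
  forall (y : Y) (l : list X), NoDup l -> (forall x, In x l -> p x = y) ->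
    (length l <= t)%nat.

Definition image {X Y : Type} (p : X -> Y) (S : X -> Prop) : Y -> Prop :=
  fun y => exists x, S x /\ p x = y.

(* Main.v *)
Require Import Defs.
From Stdlib Require Import Reals List Lra Lia Classical ClassicalEpsilon FunctionalExtensionality PropExtensionality Cantor.
Import ListNotations.
Open Scope R_scope.

Lemma met_pos {X} (d : X -> X -> R) : is_metric d -> forall x y, 0 <= d x y.
Proof. intros [H _]; exact H. Qed.
Lemma met_refl {X} (d : X -> X -> R) : is_metric d -> forall x, d x x = 0.
Proof. intros [_ [H _]] x; apply H; reflexivity. Qed.
Lemma met_eq {X} (d : X -> X -> R) : is_metric d -> forall x y, d x y = 0 -> x = y.
Proof. intros [_ [H _]] x y; apply H. Qed.
Lemma met_sym {X} (d : X -> X -> R) : is_metric d -> forall x y, d x y = d y x.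
Proof. intros [_ [_ [H _]]]; exact H. Qed.
Lemma met_tri {X} (d : X -> X -> R) : is_metric d -> forall x y z, d x z <= d x y + d y z.
Proof. intros [_ [_ [_ H]]]; exact H. Qed.
Lemma met_neq {X} (d : X -> X -> R) : is_metric d -> forall x y, x <> y -> 0 < d x y.
Proof.
  intros Hd x y Hxy. destruct (Rle_lt_or_eq_dec 0 (d x y) (met_pos d Hd x y)); auto.
  exfalso; apply Hxy; apply (met_eq d Hd); auto.
Qed.
Lemma met_zero_le {X} (d : X -> X -> R) : is_metric d -> forall x y,
  (forall e, 0 < e -> d x y < e) -> x = y.
Proof.
  intros Hd x y H. apply (met_eq d Hd). destruct (Rle_lt_or_eq_dec 0 (d x y) (met_pos d Hd x y)); auto.
  specialize (H _ r). lra.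
Qed.

Lemma dep_choice {A : Type} (Inv : nat -> A -> Prop) (Rel : nat -> A -> A -> Prop) (a0 : A) :
  Inv 0%nat a0 -> (forall s a, Inv s a -> exists b, Inv (S s) b /\ Rel s a b) ->
  exists F : nat -> A, F 0%nat = a0 /\ forall s, Inv s (F s) /\ Rel s (F s) (F (S s)).
Proof.
  intros H0 Hs.
  assert (step : forall s (a : {a | Inv s a}), {b | Inv (S s) b /\ Rel s (proj1_sig a) b}).
  { intros s [a Ha]. apply constructive_indefinite_description. apply Hs; auto. }
  pose (G := fix G (s : nat) : {a | Inv s a} :=
     match s with 0 => exist _ a0 H0
     | S s' => exist _ (proj1_sig (step s' (G s'))) (proj1 (proj2_sig (step s' (G s')))) end).
  exists (fun s => proj1_sig (G s)). split; [reflexivity|].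
  intro s. split. apply (proj2_sig (G s)).
  change (Rel s (proj1_sig (G s)) (proj1_sig (step s (G s)))).
  apply (proj2 (proj2_sig (step s (G s)))).
Qed.

Lemma fun_choice {A B} (P : A -> B -> Prop) : (forall a, exists b, P a b) -> exists f, forall a, P a (f a).
Proof.
  intros H. exists (fun a => proj1_sig (constructive_indefinite_description _ (H a))).
  intro a. exact (proj2_sig (constructive_indefinite_description _ (H a))).
Qed.

Lemma list_min {A} (l : list A) (P : A -> R -> Prop) :
  (forall a e e', P a e -> 0 < e' <= e -> P a e') ->
  (forall a, In a l -> exists e, 0 < e /\ P a e) ->
  exists e, 0 < e /\ forall a, In a l -> P a e.
Proof.
  intros Hm. induction l as [|a l IH]; intros H.
  - exists 1. split; [lra| intros a []].
  - destruct (H a (or_introl eq_refl)) as [e1 [He1 P1]].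
    destruct IH as [e2 [He2 P2]]. { intros b Hb; apply H; right; auto. }
    exists (Rmin e1 e2). split. apply Rmin_glb_lt; auto.
    intros b [<-|Hb].
    + apply (Hm _ e1); auto. split. apply Rmin_glb_lt; auto. apply Rmin_l.
    + apply (Hm _ e2); auto. split. apply Rmin_glb_lt; auto. apply Rmin_r.
Qed.

Lemma nat_min (m : nat) (P : nat -> R -> Prop) :
  (forall a e e', P a e -> 0 < e' <= e -> P a e') ->
  (forall a, (a < m)%nat -> exists e, 0 < e /\ P a e) ->
  exists e, 0 < e /\ forall a, (a < m)%nat -> P a e.
Proof.
  intros Hm H. destruct (list_min (seq 0 m) P Hm) as [e [He Pe]].
  { intros a Ha. apply in_seq in Ha. apply H. lia. }
  exists e. split; auto. intros a Ha. apply Pe. apply in_seq. lia.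
Qed.

Lemma archi (eps : R) : 0 < eps -> exists k : nat, / INR (S k) < eps.
Proof.
  intros He. destruct (archimed_cor1 eps He) as [N [H1 H2]].
  destruct N as [|k]; [lia|]. exists k; auto.
Qed.

Lemma inv_Sk_pos (k : nat) : 0 < / INR (S k).
Proof. apply Rinv_0_lt_compat. apply lt_0_INR. lia. Qed.

Lemma inv_Sk_le (k k' : nat) : (k <= k')%nat -> / INR (S k') <= / INR (S k).
Proof.
  intros H. apply Rinv_le_contravar. apply lt_0_INR; lia. apply le_INR; lia.
Qed.

Lemma open_ball {X} (d : X -> X -> R) (Hd : is_metric d) (c : X) (r : R) : Defs.open_set d (fun z => d c z < r).
Proof.
  intros x Hx. exists (r - d c x). split; [lra|]. intros y Hy.
  pose proof (met_tri d Hd c x y). lra.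
Qed.

Lemma open_out {X} (d : X -> X -> R) (Hd : is_metric d) (c : X) (r : R) : Defs.open_set d (fun z => r < d c z).
Proof.
  intros x Hx. exists (d c x - r). split; [lra|]. intros y Hy.
  pose proof (met_tri d Hd c y x). rewrite (met_sym d Hd y x) in H. lra.
Qed.

Lemma Asy_refl {X} (d : X -> X -> R) (Hd : is_metric d) f x : Asy d f x x.
Proof. intros e He. exists 0%nat. intros n _. rewrite (met_refl d Hd). auto. Qed.
Lemma Asy_sym {X} (d : X -> X -> R) (Hd : is_metric d) f x y : Asy d f x y -> Asy d f y x.
Proof. intros H e He. destruct (H e He) as [N HN]. exists N. intros n Hn. rewrite (met_sym d Hd). auto. Qed.
Lemma Asy_trans {X} (d : X -> X -> R) (Hd : is_metric d) f x y z :
  Asy d f x y -> Asy d f y z -> Asy d f x z.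
Proof.
  intros H1 H2 e He. destruct (H1 (e/2)) as [N1 HN1]; [lra|]. destruct (H2 (e/2)) as [N2 HN2]; [lra|].
  exists (N1 + N2)%nat. intros n Hn.
  pose proof (met_tri d Hd (Nat.iter n f x) (Nat.iter n f y) (Nat.iter n f z)).
  specialize (HN1 n ltac:(lia)). specialize (HN2 n ltac:(lia)). lra.
Qed.

Lemma iter_comm {X Y} (f : X -> X) (g : Y -> Y) (p : X -> Y) :
  (forall x, p (f x) = g (p x)) -> forall n x, p (Nat.iter n f x) = Nat.iter n g (p x).
Proof. intros H n x. induction n; simpl; auto. rewrite H, IHn; auto. Qed.

Lemma iter_cont {X} (d : X -> X -> R) (g : X -> X) :
  continuous_map d d g -> forall n, continuous_map d d (Nat.iter n g).
Proof.
  intros Hg n. induction n; intros x e He.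
  - exists e. split; auto.
  - destruct (Hg (Nat.iter n g x) e He) as [d1 [Hd1 H1]].
    destruct (IHn x d1 Hd1) as [d2 [Hd2 H2]].
    exists d2. split; auto. intros x' Hx'. simpl. apply H1. apply H2. auto.
Qed.

Lemma syndetic_mono (A B : nat -> Prop) : syndetic A -> (forall n, A n -> B n) -> syndetic B.
Proof. intros H Hi C HC. destruct (H C HC) as [n [H1 H2]]. exists n; auto. Qed.

Definition sincr (phi : nat -> nat) := forall k, (phi k < phi (S k))%nat.
Lemma sincr_mono phi : sincr phi -> forall a b, (a < b)%nat -> (phi a < phi b)%nat.
Proof.
  intros H a b Hab. induction b; [lia|].
  destruct (Nat.eq_dec a b) as [->|]; [apply H|]. specialize (IHb ltac:(lia)). specialize (H b). lia.
Qed.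
Lemma sincr_ge phi : sincr phi -> forall k, (k <= phi k)%nat.
Proof. intros H k. induction k; [lia|]. specialize (H k). lia. Qed.
Lemma sincr_comp phi th : sincr phi -> sincr th -> sincr (fun k => phi (th k)).
Proof. intros H1 H2 k. apply sincr_mono; auto. Qed.

Definition conv {X} (d : X -> X -> R) (s : nat -> X) (z : X) :=
  forall e, 0 < e -> exists N, forall k, (N <= k)%nat -> d (s k) z < e.

Lemma conv_sub {X} (d : X -> X -> R) s z th : conv d s z -> sincr th -> conv d (fun k => s (th k)) z.
Proof.
  intros H Ht e He. destruct (H e He) as [N HN]. exists N. intros k Hk. apply HN.
  pose proof (sincr_ge th Ht k). lia.
Qed.

Lemma list_max_nat {A} (N : A -> nat) (l : list A) : exists M, forall a, In a l -> (N a <= M)%nat.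
Proof.
  induction l as [|a l [M HM]]. exists 0%nat; intros a []. exists (Nat.max (N a) M).
  intros b [<-|Hb]. lia. specialize (HM b Hb). lia.
Qed.

Lemma cluster {X} (d : X -> X -> R) (Hd : is_metric d) : compact_space d ->
  forall s : nat -> X, exists z, forall e, 0 < e -> forall N, exists k, (N <= k)%nat /\ d (s k) z < e.
Proof.
  intros Hc s. apply NNPP. intro Hn.
  assert (H1 : forall z, exists eN : R * nat, 0 < fst eN /\ forall k, (snd eN <= k)%nat -> fst eN <= d (s k) z).
  { intro z. apply NNPP. intro H2. apply Hn. exists z. intros e He N. apply NNPP. intro H3.
    apply H2. exists (e, N). simpl. split; auto. intros k Hk. apply Rnot_lt_le. intro H4. apply H3. exists k; auto. }
  destruct (fun_choice _ H1) as [eN HeN].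
  destruct (Hc X (fun z w => d z w < fst (eN z))) as [l Hl].
  { intro z. apply open_ball; auto. }
  { intros x _. exists x. rewrite (met_refl d Hd). apply HeN. }
  destruct (list_max_nat (fun z => snd (eN z)) l) as [M HM].
  destruct (Hl (s M) I) as [z [Hz1 Hz2]]. destruct (HeN z) as [_ H].
  specialize (H M (HM z Hz1)). rewrite (met_sym d Hd) in H. lra.
Qed.

Lemma bw {X} (d : X -> X -> R) (Hd : is_metric d) : compact_space d ->
  forall s : nat -> X, exists th z, sincr th /\ conv d (fun k => s (th k)) z.
Proof.
  intros Hc s. destruct (cluster d Hd Hc s) as [z Hz].
  destruct (Hz 1 ltac:(lra) 0%nat) as [a0 [_ Ha0]].
  destruct (dep_choice (fun k a => d (s a) z < / INR (S k)) (fun k a b => (a < b)%nat) a0) as [F [HF0 HF]].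
  { simpl. rewrite Rinv_1. auto. }
  { intros k a _. destruct (Hz (/ INR (S (S k))) (inv_Sk_pos _) (S a)) as [b [Hb1 Hb2]].
    exists b. split; auto. }
  exists F, z. split. intro k. apply HF.
  intros e He. destruct (archi e He) as [K HK]. exists K. intros k Hk.
  pose proof (inv_Sk_le K k Hk). pose proof (proj1 (HF k)). cbv beta in H0. lra.
Qed.

Lemma bw_list {X} (d : X -> X -> R) (Hd : is_metric d) (Hc : compact_space d) (f : X -> X) (M : nat -> Prop) :
  forall l : list X, forall phi, sincr phi -> (forall k, M (phi k)) ->
  exists psi, sincr psi /\ (forall k, M (psi k)) /\
    forall x, In x l -> exists z, conv d (fun k => Nat.iter (psi k) f x) z.
Proof.
  induction l as [|a l IH]; intros phi Hp HM.
  - exists phi. split; auto. split; auto. intros x [].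
  - destruct (IH phi Hp HM) as [psi [Hs [HMs Hl]]].
    destruct (bw d Hd Hc (fun k => Nat.iter (psi k) f a)) as [th [z [Ht Hz]]].
    exists (fun k => psi (th k)). split. apply sincr_comp; auto. split. intro; apply HMs.
    intros x [<-|Hx]. exists z; auto.
    destruct (Hl x Hx) as [z' Hz']. exists z'. apply (conv_sub d (fun k => Nat.iter (psi k) f x)); auto.
Qed.

Lemma inf_seq (M : nat -> Prop) : infinite_nat_set M -> exists phi, sincr phi /\ forall k, M (phi k).
Proof.
  intros HM. destruct (HM 0%nat) as [a0 [_ Ha0]].
  destruct (dep_choice (fun k a => M a) (fun k a b => (a < b)%nat) a0) as [F [_ HF]]; auto.
  { intros k a _. destruct (HM (S a)) as [b [Hb1 Hb2]]. exists b. split; auto. }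
  exists F. split. intro k; apply HF. intro k; apply HF.
Qed.

Lemma NoDup_map_inj_on {A B} (h : A -> B) (l : list A) :
  NoDup l -> (forall x y, In x l -> In y l -> h x = h y -> x = y) -> NoDup (map h l).
Proof.
  induction l as [|a l IH]; intros Hn Hi; simpl. constructor.
  inversion Hn; subst. constructor.
  - intro Hin. apply in_map_iff in Hin. destruct Hin as [x [Hx1 Hx2]].
    assert (x = a) by (apply Hi; simpl; auto). subst; contradiction.
  - apply IH; auto. intros x y Hx Hy; apply Hi; simpl; auto.
Qed.

Lemma unif_cont {X Y} (dX : X -> X -> R) (dY : Y -> Y -> R) (HdX : is_metric dX) (HdY : is_metric dY)
  (Hc : compact_space dX) (p : X -> Y) : continuous_map dX dY p ->
  forall e, 0 < e -> exists del, 0 < del /\ forall x x', dX x x' < del -> dY (p x) (p x') < e.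
Proof.
  intros Hp e He.
  assert (H1 : forall x, exists del, 0 < del /\ forall x', dX x x' < del -> dY (p x) (p x') < e/2).
  { intro x. apply Hp. lra. }
  destruct (fun_choice _ H1) as [dl Hdl].
  destruct (Hc X (fun x z => dX x z < dl x / 2)) as [l Hl].
  { intro x. apply open_ball; auto. }
  { intros x _. exists x. rewrite (met_refl dX HdX). pose proof (proj1 (Hdl x)). lra. }
  destruct (list_min l (fun a r => r <= dl a / 2)) as [del [Hdel Hdel2]].
  { intros a r r' H H'. lra. }
  { intros a _. exists (dl a / 2). pose proof (proj1 (Hdl a)). split; lra. }
  exists del. split; auto. intros x x' Hxx.
  destruct (Hl x I) as [a [Ha1 Ha2]]. specialize (Hdel2 a Ha1). destruct (Hdl a) as [Hpos Ha].
  pose proof (met_tri dX HdX a x x').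
  pose proof (Ha x ltac:(lra)). pose proof (Ha x' ltac:(lra)).
  pose proof (met_tri dY HdY (p x) (p a) (p x')). rewrite (met_sym dY HdY (p x) (p a)) in H3. lra.
Qed.

Lemma sprox_transfer {X Y} (dX : X -> X -> R) (dY : Y -> Y -> R) (HdX : is_metric dX) (HdY : is_metric dY)
  (Hc : compact_space dX) (f : X -> X) (g : Y -> Y) (p : X -> Y) :
  continuous_map dX dY p -> (forall x, p (f x) = g (p x)) ->
  forall x y, SProx dX f x y -> SProx dY g (p x) (p y).
Proof.
  intros Hp Hcomm x y H eta Heta. destruct (unif_cont dX dY HdX HdY Hc p Hp eta Heta) as [del [Hdel Hu]].
  apply (syndetic_mono _ _ (H del Hdel)). intros n Hn.
  rewrite <- !(iter_comm f g p Hcomm). apply Hu; auto.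
Qed.

Lemma image_compact {X Y} (dX : X -> X -> R) (dY : Y -> Y -> R) (p : X -> Y) (S : X -> Prop) :
  continuous_map dX dY p -> compact_subset dX S -> compact_subset dY (image p S).
Proof.
  intros Hp Hc I U HU Hcov.
  destruct (Hc I (fun i x => U i (p x))) as [l Hl].
  { intros i x Hx. destruct (HU i (p x) Hx) as [r [Hr Hr2]].
    destruct (Hp x r Hr) as [del [Hdel Hd]]. exists del. split; [auto|]. intros y Hy. apply Hr2. apply Hd; auto. }
  { intros x Hx. apply Hcov. exists x; auto. }
  exists l. intros y [x [Hx <-]]. apply Hl; auto.
Qed.

Lemma fact {X Y} (dX : X -> X -> R) (dY : Y -> Y -> R) (HdX : is_metric dX) (HdY : is_metric dY)
  (Hc : compact_space dX) (f : X -> X) (g : Y -> Y) (p : X -> Y) (t : nat)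
  (Hp : continuous_map dX dY p) (Hcomm : forall x, p (f x) = g (p x)) (Hfib : fibers_bounded p t)
  (l : list X) : NoDup l -> length l = S t ->
  (exists eps, 0 < eps /\ exists M : nat -> Prop, infinite_nat_set M /\
        forall n, M n -> forall x y, In x l -> In y l -> x <> y ->
          eps <= dX (Nat.iter n f x) (Nat.iter n f y)) ->
  (forall x y, In x l -> In y l -> Asy dY g (p x) (p y)) -> False.
Proof.
  intros Hn Hlen [eps [Heps [M [HM Hsep]]]] Hasy.
  destruct (inf_seq M HM) as [phi [Hphi HMphi]].
  destruct (bw_list dX HdX Hc f M l phi Hphi HMphi) as [psi [Hpsi [HMpsi Hconv]]].
  assert (Hz: forall x, exists z, In x l -> conv dX (fun k => Nat.iter (psi k) f x) z).
  { intro x. destruct (classic (In x l)) as [H|H].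
    destruct (Hconv x H) as [z Hz]; exists z; auto. exists x; intros; contradiction. }
  destruct (fun_choice _ Hz) as [zf Hzf].
  assert (Hx0 : exists x0, In x0 l). { destruct l as [|x0 l0]; [simpl in Hlen; discriminate|]. exists x0; left; auto. }
  destruct Hx0 as [x0 Hx0].
  assert (Hsame : forall x y, In x l -> In y l -> p (zf x) = p (zf y)).
  { intros x y Hx Hy. apply (met_zero_le dY HdY). intros e He.
    destruct (Hp (zf x) (e/3)) as [d1 [Hd1 H1]]; [lra|].
    destruct (Hp (zf y) (e/3)) as [d2 [Hd2 H2]]; [lra|].
    destruct (Hzf x Hx d1 Hd1) as [N1 HN1]. destruct (Hzf y Hy d2 Hd2) as [N2 HN2].
    destruct (Hasy x y Hx Hy (e/3)) as [N3 HN3]; [lra|].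
    set (k := (N1 + N2 + N3)%nat). pose proof (sincr_ge psi Hpsi k) as Hk.
    specialize (HN1 k ltac:(unfold k; lia)). specialize (HN2 k ltac:(unfold k; lia)).
    specialize (HN3 (psi k) ltac:(unfold k in *; lia)).
    rewrite (met_sym dX HdX) in HN1, HN2.
    specialize (H1 _ HN1). specialize (H2 _ HN2).
    rewrite (iter_comm f g p Hcomm) in H1, H2.
    pose proof (met_tri dY HdY (p (zf x)) (Nat.iter (psi k) g (p x)) (p (zf y))).
    pose proof (met_tri dY HdY (Nat.iter (psi k) g (p x)) (Nat.iter (psi k) g (p y)) (p (zf y))).
    rewrite (met_sym dY HdY (p (zf y))) in H2. lra. }
  assert (Hnd : NoDup (map zf l)).
  { apply NoDup_map_inj_on; auto. intros x y Hx Hy Hxy. apply NNPP. intro Hne.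
    destruct (Hzf x Hx (eps/2)) as [N1 HN1]; [lra|]. destruct (Hzf y Hy (eps/2)) as [N2 HN2]; [lra|].
    set (k := (N1 + N2)%nat). specialize (HN1 k ltac:(unfold k; lia)). specialize (HN2 k ltac:(unfold k; lia)).
    specialize (Hsep (psi k) (HMpsi k) x y Hx Hy Hne).
    pose proof (met_tri dX HdX (Nat.iter (psi k) f x) (zf x) (Nat.iter (psi k) f y)).
    rewrite Hxy in H, HN1. rewrite (met_sym dX HdX (zf y)) in H. lra. }
  pose proof (Hfib (p (zf x0)) (map zf l) Hnd) as Hb.
  rewrite length_map, Hlen in Hb.
  assert (S t <= t)%nat; [|lia]. apply Hb.
  intros w Hw. apply in_map_iff in Hw. destruct Hw as [x [<- Hx]]. apply Hsame; auto.
Qed.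

Lemma sub_nodup {A} (l : list A) (n : nat) : NoDup l -> (n <= length l)%nat ->
  exists l', NoDup l' /\ length l' = n /\ forall a, In a l' -> In a l.
Proof.
  revert n. induction l as [|a l IH]; intros n Hn Hle.
  - simpl in Hle. exists []. split. constructor. split. simpl; lia. intros a [].
  - destruct n as [|n]. exists []. split. constructor. split. auto. intros b [].
    inversion Hn; subst. simpl in Hle. destruct (IH n H2 ltac:(lia)) as [l' [K1 [K3 K4]]].
    exists (a :: l'). split. constructor; auto. split. simpl; lia.
    intros b [<-|Hb]; simpl; auto.
Qed.

Lemma max_list {A} (P : A -> Prop) (t : nat) :
  (forall l, NoDup l -> (forall a, In a l -> P a) -> (length l <= t)%nat) ->
  exists l, NoDup l /\ forall a, In a l <-> P a.
Proof.
  intros Hb.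
  assert (H : forall n l0, NoDup l0 -> (forall a, In a l0 -> P a) -> (t - length l0 <= n)%nat ->
     exists l, NoDup l /\ forall a, In a l <-> P a).
  { induction n as [|n IH]; intros l0 Hn HP Hlen.
    - exists l0. split; auto. intro a. split; auto. intro Ha. apply NNPP; intro Hn2.
      assert (length (a :: l0) <= t)%nat. apply Hb. constructor; auto. intros b [<-|Hb2]; auto.
      simpl in H; lia.
    - destruct (classic (forall a, P a -> In a l0)) as [Hc|Hc].
      + exists l0. split; auto. intro a; split; auto.
      + apply not_all_ex_not in Hc. destruct Hc as [a Ha].
        apply imply_to_and in Ha. destruct Ha as [Ha1 Ha2].
        apply (IH (a :: l0)). constructor; auto. intros b [<-|Hb2]; auto.
        assert (length (a :: l0) <= t)%nat. apply Hb. constructor; auto. intros b [<-|Hb2]; auto.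
        simpl in *; lia. }
  apply (H t []). constructor. intros a []. lia.
Qed.

Lemma part1 {X Y} (dX : X -> X -> R) (dY : Y -> Y -> R) (HdX : is_metric dX) (HdY : is_metric dY)
  (Hc : compact_space dX) (f : X -> X) (g : Y -> Y) (p : X -> Y) (t : nat)
  (Hp : continuous_map dX dY p) (Hcomm : forall x, p (f x) = g (p x)) (Hfib : fibers_bounded p t)
  (Sc : X -> Prop) (HSunc : uncountable_subset Sc) (HSscr : synd_scrambled dX f Sc)
  (Hcls : forall l, NoDup l -> (forall x, In x l -> Sc x) ->
     (forall x y, In x l -> In y l -> Asy dY g (p x) (p y)) -> (length l <= t)%nat) :
  exists S' : Y -> Prop, (forall y, S' y -> image p Sc y) /\
     uncountable_subset S' /\ synd_scrambled dY g S'.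
Proof.
  assert (Hne : exists x0, Sc x0).
  { apply NNPP; intro H. apply HSunc. exists (fun _ => 0%nat). intros x y Hx. exfalso; apply H; eauto. }
  destruct Hne as [x0 Hx0].
  pose (Cl := fun y y' => image p Sc y' /\ Asy dY g y y').
  pose (rep := fun y => epsilon (inhabits (p x0)) (Cl y)).
  assert (Hrep : forall y, image p Sc y -> image p Sc (rep y) /\ Asy dY g y (rep y)).
  { intros y Hy. apply (epsilon_spec (inhabits (p x0)) (Cl y)). exists y. split; auto. apply Asy_refl; auto. }
  assert (Hrep2 : forall y y', Asy dY g y y' -> rep y = rep y').
  { intros y y' H. unfold rep. f_equal. apply functional_extensionality; intro z.
    apply propositional_extensionality. unfold Cl. split; intros [H1 H2]; split; auto.
    - eapply Asy_trans; eauto. apply Asy_sym; auto.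
    - eapply Asy_trans; eauto. }
  assert (Hrr : forall y, image p Sc y -> rep (rep y) = rep y).
  { intros y Hy. apply Hrep2. apply Asy_sym; auto. apply Hrep; auto. }
  set (S' := fun y => image p Sc y /\ rep y = y).
  assert (Hunc : uncountable_subset S').
  { intros [h Hh]. apply HSunc.
    assert (Hcl : forall r : Y, exists L, NoDup L /\ forall x, In x L <-> (Sc x /\ rep (p x) = r)).
    { intro r. apply (max_list _ t). intros l Hn HP. apply Hcls; auto.
      - intros x Hx; apply HP; auto.
      - intros x y Hx Hy. destruct (HP x Hx) as [Hx1 Hx2]. destruct (HP y Hy) as [Hy1 Hy2].
        assert (Ix : image p Sc (p x)) by (exists x; auto).
        assert (Iy : image p Sc (p y)) by (exists y; auto).
        apply (Asy_trans dY HdY g _ (rep (p x))). apply Hrep; auto.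
        rewrite Hx2, <- Hy2. apply Asy_sym; auto. apply Hrep; auto. }
    destruct (fun_choice _ Hcl) as [Lc HLc].
    assert (Hidx : forall x, exists n, Sc x -> nth_error (Lc (rep (p x))) n = Some x).
    { intro x. destruct (classic (Sc x)) as [H|H].
      - assert (In x (Lc (rep (p x)))) by (apply HLc; auto). apply In_nth_error in H0.
        destruct H0 as [n Hn]. exists n; auto.
      - exists 0%nat; intro; contradiction. }
    destruct (fun_choice _ Hidx) as [idx Hidx2].
    exists (fun x => Cantor.to_nat (h (rep (p x)), idx x)).
    intros x y Hx Hy Hxy. apply Cantor.to_nat_inj in Hxy. injection Hxy as E1 E2.
    assert (Ix : image p Sc (p x)) by (exists x; auto).
    assert (Iy : image p Sc (p y)) by (exists y; auto).
    assert (E3 : rep (p x) = rep (p y)).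
    { apply Hh; auto. split. apply Hrep; auto. apply Hrr; auto. split. apply Hrep; auto. apply Hrr; auto. }
    pose proof (Hidx2 x Hx). pose proof (Hidx2 y Hy). rewrite E3, E2 in H. rewrite H in H0. injection H0; auto. }
  exists S'. split. intros y [H _]; auto. split; auto. split.
  - apply NNPP; intro H. apply Hunc. exists (fun _ => 0%nat). intros y1 y2 H1 H2 _.
    apply NNPP; intro H3. apply H. eauto.
  - intros y1 y2 [[x1 [Hx1 E1]] R1] [[x2 [Hx2 E2]] R2] Hne. subst y1 y2.
    assert (x1 <> x2) by (intro; subst; auto).
    split.
    + apply (sprox_transfer dX dY HdX HdY Hc f g p Hp Hcomm). apply HSscr; auto.
    + intro HA. apply Hne. rewrite <- R1, <- R2. apply Hrep2; auto.
Qed.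

Definition inb {Y} (d : Y -> Y -> R) (B : Y * R) (z : Y) := d (fst B) z <= snd B.
Definition valid {Y} (K : Y -> Prop) (B : Y * R) := K (fst B) /\ 0 < snd B.
Definition le_box {Y} (d : Y -> Y -> R) (K : Y -> Prop) (B' B : Y * R) :=
  K (fst B') /\ 0 < snd B' /\ d (fst B) (fst B') + snd B' <= snd B.
Definition Dk {Y} (d : Y -> Y -> R) (g : Y -> Y) (k : nat) (u v : Y) :=
  forall N, exists n, (N <= n)%nat /\ / INR (S k) < d (Nat.iter n g u) (Nat.iter n g v).
Definition Dense {Y} (d : Y -> Y -> R) (K : Y -> Prop) (g : Y -> Y) (k : nat) (U V : Y * R) :=
  forall U' V', le_box d K U' U -> le_box d K V' V ->
   exists u v, K u /\ K v /\ inb d U' u /\ inb d V' v /\ Dk d g k u v.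
Definition disj {Y} (d : Y -> Y -> R) (B1 B2 : Y * R) := snd B1 + snd B2 < d (fst B1) (fst B2).
Definition avoid {Y} (d : Y -> Y -> R) (K : Y -> Prop) (g : Y -> Y) (k : nat) (A B : Y * R) :=
  forall u v, K u -> K v -> inb d A u -> inb d B v -> ~ Dk d g k u v.


Lemma le_box_refl {Y} d (Hd : is_metric d) (K : Y -> Prop) B : valid K B -> le_box d K B B.
Proof. intros [H1 H2]. split; auto. split; auto. rewrite (met_refl d Hd). lra. Qed.

Lemma le_box_trans {Y} d (Hd : is_metric d) (K : Y -> Prop) B1 B2 B3 :
  le_box d K B1 B2 -> le_box d K B2 B3 -> le_box d K B1 B3.
Proof.
  intros [H1 [H2 H3]] [H4 [H5 H6]]. split; auto. split; auto.
  pose proof (met_tri d Hd (fst B3) (fst B2) (fst B1)). lra.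
Qed.

Lemma le_box_valid {Y} d (K : Y -> Prop) B' B : le_box d K B' B -> valid K B'.
Proof. intros [H1 [H2 _]]; split; auto. Qed.

Lemma inb_le {Y} d (Hd : is_metric d) (K : Y -> Prop) B' B z : le_box d K B' B -> inb d B' z -> inb d B z.
Proof.
  unfold inb. intros [_ [_ H]] H2. pose proof (met_tri d Hd (fst B) (fst B') z). lra.
Qed.

Lemma le_box_shrink {Y} d (Hd : is_metric d) (K : Y -> Prop) B r : valid K B -> 0 < r <= snd B ->
  le_box d K (fst B, r) B.
Proof. intros [H1 H2] H3. split; auto. simpl. split; [lra|]. rewrite (met_refl d Hd). lra. Qed.

Lemma inb_center {Y} d (Hd : is_metric d) (K : Y -> Prop) B : valid K B -> inb d B (fst B).
Proof. intros [_ H]. unfold inb. rewrite (met_refl d Hd). lra. Qed.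

Lemma Dense_her {Y} d (Hd : is_metric d) (K : Y -> Prop) g k U V U' V' :
  Dense d K g k U V -> le_box d K U' U -> le_box d K V' V -> Dense d K g k U' V'.
Proof.
  intros H H1 H2 U'' V'' H3 H4. apply H; eapply le_box_trans; eauto.
Qed.

Lemma avoid_her {Y} d (Hd : is_metric d) (K : Y -> Prop) g k U V U' V' :
  avoid d K g k U V -> le_box d K U' U -> le_box d K V' V -> avoid d K g k U' V'.
Proof.
  intros H H1 H2 u v Ku Kv Hu Hv. apply H; auto; eapply inb_le; eauto.
Qed.

Lemma disj_her {Y} d (Hd : is_metric d) (K : Y -> Prop) B1 B2 B1' B2' :
  disj d B1 B2 -> le_box d K B1' B1 -> le_box d K B2' B2 -> disj d B1' B2'.
Proof.
  unfold disj. intros H [_ [_ H1]] [_ [_ H2]].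
  pose proof (met_tri d Hd (fst B1) (fst B1') (fst B2)).
  pose proof (met_tri d Hd (fst B1') (fst B2') (fst B2)).
  rewrite (met_sym d Hd (fst B2') (fst B2)) in H3. lra.
Qed.

Lemma disj_ne {Y} d (Hd : is_metric d) (B1 B2 : Y * R) z1 z2 :
  disj d B1 B2 -> inb d B1 z1 -> inb d B2 z2 -> z1 <> z2.
Proof.
  unfold disj, inb. intros H H1 H2 <-. pose proof (met_tri d Hd (fst B1) z1 (fst B2)).
  rewrite (met_sym d Hd z1) in H0. lra.
Qed.

Lemma disj_sym {Y} d (Hd : is_metric d) (B1 B2 : Y * R) : disj d B1 B2 -> disj d B2 B1.
Proof. unfold disj. rewrite (met_sym d Hd). lra. Qed.

Lemma split_box {Y} d (Hd : is_metric d) (K : Y -> Prop) (Hp : perfect_subset d K) B eps :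
  valid K B -> 0 < eps -> exists B1 B2, le_box d K B1 B /\ le_box d K B2 B /\ disj d B1 B2 /\
    snd B1 <= eps /\ snd B2 <= eps.
Proof.
  intros [HK Hr] He. destruct (Hp (fst B) HK (snd B / 2)) as [y [Ky [Hy1 Hy2]]]; [lra|].
  pose proof (met_neq d Hd (fst B) y (fun E => Hy1 (eq_sym E))) as Hpos.
  set (r := Rmin eps (Rmin (d (fst B) y / 3) (snd B / 2))).
  assert (r1 : r <= eps) by apply Rmin_l.
  assert (r2 : r <= d (fst B) y / 3) by (eapply Rle_trans; [apply Rmin_r|apply Rmin_l]).
  assert (r3 : r <= snd B / 2) by (eapply Rle_trans; [apply Rmin_r|apply Rmin_r]).
  assert (r0 : 0 < r) by (apply Rmin_glb_lt; [lra|apply Rmin_glb_lt; lra]).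
  exists (fst B, r), (y, r). split; [|split; [|split]].
  - split; auto. simpl. split; auto. rewrite (met_refl d Hd); lra.
  - split; auto. simpl. split; auto. lra.
  - unfold disj; simpl. lra.
  - simpl; lra.
Qed.

Lemma msplit {Y} d (Hd : is_metric d) (K : Y -> Prop) (Hp : perfect_subset d K) B :
  valid K B -> forall m, exists Vs : nat -> Y * R, (forall i, (i < m)%nat -> le_box d K (Vs i) B) /\
    forall i j, (i < m)%nat -> (j < m)%nat -> i <> j -> disj d (Vs i) (Vs j).
Proof.
  intros HB m. induction m as [|m IH].
  - exists (fun _ => B). split; intros; lia.
  - destruct m as [|m].
    + exists (fun _ => B). split. intros; apply le_box_refl; auto. intros; lia.
    + destruct IH as [Vs [H1 H2]].
      destruct (split_box d Hd K Hp (Vs m) 1) as [B1 [B2 [E1 [E2 [E3 _]]]]].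
      { eapply le_box_valid; apply H1; lia. } lra.
      exists (fun i => if Nat.eq_dec i m then B1 else if Nat.eq_dec i (S m) then B2 else Vs i).
      split.
      * intros i Hi. destruct (Nat.eq_dec i m).
        { apply (le_box_trans d Hd K _ (Vs m)); [auto| apply H1; lia]. }
        destruct (Nat.eq_dec i (S m)).
        { apply (le_box_trans d Hd K _ (Vs m)); [auto| apply H1; lia]. }
        apply H1; lia.
      * intros i j Hi Hj Hij.
        assert (Hv : forall i, (i < S m)%nat -> valid K (Vs i)) by (intros; eapply le_box_valid; apply H1; auto).
        destruct (Nat.eq_dec i m) as [Eim|Eim]; destruct (Nat.eq_dec j m) as [Ejm|Ejm].
        -- lia.
        -- destruct (Nat.eq_dec j (S m)) as [Ej|Ej]. exact E3.
           apply (disj_her d Hd K (Vs m) (Vs j)); auto. apply H2; lia. apply le_box_refl; auto. apply Hv; lia.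
        -- destruct (Nat.eq_dec i (S m)) as [Ei|Ei]. apply disj_sym; auto.
           apply (disj_her d Hd K (Vs i) (Vs m)); auto. apply H2; lia. apply le_box_refl; auto. apply Hv; lia.
        -- destruct (Nat.eq_dec i (S m)) as [Ei|Ei]; destruct (Nat.eq_dec j (S m)) as [Ej|Ej].
           ++ lia.
           ++ apply (disj_her d Hd K (Vs m) (Vs j)); auto. apply H2; lia. apply le_box_refl; auto. apply Hv; lia.
           ++ apply (disj_her d Hd K (Vs i) (Vs m)); auto. apply H2; lia. apply le_box_refl; auto. apply Hv; lia.
           ++ apply H2; lia.
Qed.

Lemma fip {Y} d (Hd : is_metric d) (K : Y -> Prop) (HK : compact_subset d K) (Bs : nat -> Y * R) :
  (forall k, le_box d K (Bs (S k)) (Bs k)) -> valid K (Bs 0%nat) ->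
  exists z, K z /\ forall k, inb d (Bs k) z.
Proof.
  intros Hn H0.
  assert (Hv : forall k, valid K (Bs k)).
  { intro k; destruct k; auto. eapply le_box_valid; apply Hn. }
  assert (Hch : forall m k z, (k <= m)%nat -> inb d (Bs m) z -> inb d (Bs k) z).
  { intros m k z Hkm. induction Hkm; auto. intro H. apply IHHkm. eapply inb_le; eauto. }
  apply NNPP; intro Hne.
  destruct (HK nat (fun k z => snd (Bs k) < d (fst (Bs k)) z)) as [l Hl].
  { intro k. apply open_out; auto. }
  { intros z Kz. apply NNPP; intro H1. apply Hne. exists z. split; auto. intro k.
    unfold inb. apply Rnot_lt_le. intro H2. apply H1. exists k; auto. }
  destruct (list_max_nat (fun k => k) l) as [m Hm].
  destruct (Hl (fst (Bs m)) (proj1 (Hv m))) as [k [Hk1 Hk2]].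
  pose proof (Hch m k (fst (Bs m)) (Hm k Hk1) (inb_center d Hd K _ (Hv m))). unfold inb in H. lra.
Qed.

Lemma notD_asy {Y} d (Hd : is_metric d) (g : Y -> Y) u v : (forall k, ~ Dk d g k u v) -> Asy d g u v.
Proof.
  intros H e He. destruct (archi e He) as [k Hk]. specialize (H k). unfold Dk in H.
  apply not_all_ex_not in H. destruct H as [N HN]. exists N. intros n Hn.
  apply Rle_lt_trans with (/ INR (S k)); auto. apply Rnot_lt_le. intro H. apply HN. exists n; auto.
Qed.

Lemma key {Y} d (Hd : is_metric d) (K : Y -> Prop) (HK : compact_subset d K) (Hp : perfect_subset d K)
  (g : Y -> Y) (t : nat)
  (Hcls : forall l, NoDup l -> length l = S t -> (forall y, In y l -> K y) ->
     (forall y z, In y l -> In z l -> Asy d g y z) -> False) :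
  forall U V, valid K U -> valid K V -> exists k U' V', le_box d K U' U /\ le_box d K V' V /\ Dense d K g k U' V'.
Proof.
  intros U V HU HV. apply NNPP; intro Hn.
  assert (Hav : forall k U' V', le_box d K U' U -> le_box d K V' V ->
     exists U'' V'', le_box d K U'' U' /\ le_box d K V'' V' /\ avoid d K g k U'' V'').
  { intros k U' V' H1 H2. apply NNPP; intro H. apply Hn. exists k, U', V'. split; auto. split; auto.
    intros U'' V'' H3 H4. apply NNPP; intro H5. apply H. exists U'', V''. split; auto. split; auto.
    intros u v Ku Kv Hu Hv HD. apply H5. exists u, v; auto. }
  destruct (msplit d Hd K Hp V HV (S t)) as [Vs0 [HV1 HV2]].
  assert (Hstep : forall k W Vs, le_box d K W U -> (forall i, (i < S t)%nat -> le_box d K (Vs i) (Vs0 i)) ->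
     forall m, (m <= S t)%nat -> exists W' Vs', le_box d K W' W /\ (forall i, (i < S t)%nat -> le_box d K (Vs' i) (Vs i))
        /\ forall i, (i < m)%nat -> avoid d K g k W' (Vs' i)).
  { intros k W Vs HW HVs m. induction m as [|m IH]; intros Hm.
    - exists W, Vs. split. apply le_box_refl; auto. eapply le_box_valid; eauto.
      split. intros i Hi. apply le_box_refl; auto. eapply le_box_valid; eauto. intros; lia.
    - destruct (IH ltac:(lia)) as [W1 [Vs1 [E1 [E2 E3]]]].
      destruct (Hav k W1 (Vs1 m)) as [W2 [V2 [F1 [F2 F3]]]].
      { eapply le_box_trans; eauto. }
      { apply (le_box_trans d Hd K _ (Vs m)); [apply E2; lia|]. apply (le_box_trans d Hd K _ (Vs0 m)); [apply HVs; lia|]. apply HV1; lia. }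
      exists W2, (fun i => if Nat.eq_dec i m then V2 else Vs1 i). split. eapply le_box_trans; eauto.
      split.
      + intros i Hi. destruct (Nat.eq_dec i m) as [->|]. eapply le_box_trans; eauto. apply E2; auto.
      + intros i Hi. destruct (Nat.eq_dec i m) as [->|]. auto.
        apply (avoid_her d Hd K g k W1 (Vs1 i)); [apply E3; lia| auto |].
        apply le_box_refl; auto. eapply le_box_valid; apply E2; lia. }
  destruct (dep_choice (fun k (a : (Y * R) * (nat -> Y * R)) => le_box d K (fst a) U /\
        forall i, (i < S t)%nat -> le_box d K (snd a i) (Vs0 i))
     (fun k a b => le_box d K (fst b) (fst a) /\ (forall i, (i < S t)%nat -> le_box d K (snd b i) (snd a i))
        /\ forall i, (i < S t)%nat -> avoid d K g k (fst b) (snd b i)) (U, Vs0)) as [F [HF0 HF]].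
  { simpl. split. apply le_box_refl; auto. intros i Hi. apply le_box_refl; auto. eapply le_box_valid; apply HV1; auto. }
  { intros k [W Vs] [H1 H2]. simpl in *. destruct (Hstep k W Vs H1 H2 (S t) ltac:(lia)) as [W' [Vs' [E1 [E2 E3]]]].
    exists (W', Vs'). simpl. split; [split|split; [|split]]; auto.
    eapply le_box_trans; eauto. intros i Hi. eapply le_box_trans; eauto. }
  destruct (fip d Hd K HK (fun k => fst (F k))) as [u [Ku Hu]].
  { intro k. apply HF. }
  { rewrite HF0. auto. }
  assert (Hvc : forall i, exists v, (i < S t)%nat -> K v /\ forall k, inb d (snd (F k) i) v).
  { intro i. destruct (Compare_dec.lt_dec i (S t)) as [Hi|Hi].
    - destruct (fip d Hd K HK (fun k => snd (F k) i)) as [v [Kv Hv]].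
      { intro k. apply HF; auto. }
      { rewrite HF0. simpl. eapply le_box_valid; apply HV1; auto. }
      exists v; auto.
    - exists u; intros; lia. }
  destruct (fun_choice _ Hvc) as [v Hv].
  assert (HA : forall i, (i < S t)%nat -> Asy d g u (v i)).
  { intros i Hi. apply notD_asy; auto. intro k. destruct (HF k) as [_ [_ [_ H]]].
    apply (H i Hi); auto. apply Hv; auto. apply Hv; auto. }
  apply (Hcls (map v (seq 0 (S t)))).
  - apply NoDup_map_inj_on. apply seq_NoDup. intros i j Hi Hj Hij. apply in_seq in Hi, Hj.
    apply NNPP; intro Hne. destruct (Hv i ltac:(lia)) as [_ Hvi]. destruct (Hv j ltac:(lia)) as [_ Hvj].
    specialize (Hvi 0%nat). specialize (Hvj 0%nat). rewrite HF0 in Hvi, Hvj. simpl in Hvi, Hvj.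
    apply (disj_ne d Hd (Vs0 i) (Vs0 j) (v i) (v j)); auto. apply HV2; lia.
  - rewrite length_map, length_seq. auto.
  - intros y Hy. apply in_map_iff in Hy. destruct Hy as [i [<- Hi]]. apply in_seq in Hi. apply Hv. lia.
  - intros y z Hy Hz. apply in_map_iff in Hy, Hz. destruct Hy as [i [<- Hi]]. destruct Hz as [j [<- Hj]].
    apply in_seq in Hi, Hj. apply (Asy_trans d Hd g _ u). apply Asy_sym; auto. apply HA; lia. apply HA; lia.
Qed.

Definition Sep {Y} (d : Y -> Y -> R) (K : Y -> Prop) (g : Y -> Y) (s k : nat) (U V : Y * R) :=
  exists n, (s <= n)%nat /\ forall u v, K u -> K v -> inb d U u -> inb d V v ->
    / INR (S k) < d (Nat.iter n g u) (Nat.iter n g v).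

Definition LInv {Y} (d : Y -> Y -> R) (K : Y -> Prop) (g : Y -> Y) (s : nat)
  (L : (nat -> Y * R) * (nat -> nat -> nat)) :=
  (forall j, (j < 2 ^ s)%nat -> valid K (fst L j) /\ snd (fst L j) <= / INR (S s)) /\
  (forall i j, (i < 2 ^ s)%nat -> (j < 2 ^ s)%nat -> i <> j ->
     disj d (fst L i) (fst L j) /\ Dense d K g (snd L i j) (fst L i) (fst L j) /\
     Sep d K g s (snd L i j) (fst L i) (fst L j)).

Definition LRel {Y} (d : Y -> Y -> R) (K : Y -> Prop) (s : nat)
  (L L' : (nat -> Y * R) * (nat -> nat -> nat)) :=
  (forall q, (q < 2 ^ s)%nat -> le_box d K (fst L' (2 * q)%nat) (fst L q) /\
      le_box d K (fst L' (S (2 * q))) (fst L q)) /\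
  (forall i j q r, (q < 2 ^ s)%nat -> (r < 2 ^ s)%nat -> q <> r ->
      (i = 2 * q \/ i = S (2 * q))%nat -> (j = 2 * r \/ j = S (2 * r))%nat -> snd L' i j = snd L q r).

Lemma pow2S s : (2 ^ S s = 2 * 2 ^ s)%nat.
Proof. reflexivity. Qed.

Lemma par_cases j : (Nat.odd j = false /\ j = 2 * Nat.div2 j)%nat \/ (Nat.odd j = true /\ j = S (2 * Nat.div2 j))%nat.
Proof. pose proof (Nat.div2_odd j). destruct (Nat.odd j); simpl in H; [right|left]; split; auto; lia. Qed.

Lemma div2_lt j s : (j < 2 ^ S s)%nat -> (Nat.div2 j < 2 ^ s)%nat.
Proof. rewrite pow2S. intro H. pose proof (Nat.div2_odd j). destruct (Nat.odd j); simpl in H0; lia. Qed.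

Lemma odd2 q : Nat.odd (2 * q) = false /\ Nat.div2 (2 * q) = q.
Proof.
  pose proof (Nat.div2_odd (2 * q)). rewrite Nat.div2_double in *. split; auto.
  destruct (Nat.odd (2 * q)); simpl in H; auto; lia.
Qed.
Lemma odd2S q : Nat.odd (S (2 * q)) = true /\ Nat.div2 (S (2 * q)) = q.
Proof.
  pose proof (Nat.div2_odd (S (2 * q))). rewrite Nat.div2_succ_double in *. split; auto.
  destruct (Nat.odd (S (2 * q))); simpl in H; auto; lia.
Qed.

Lemma le_box_rad {Y} d (Hd : is_metric d) (K : Y -> Prop) B' B : le_box d K B' B -> snd B' <= snd B.
Proof. intros [_ [_ H]]. pose proof (met_pos d Hd (fst B) (fst B')). lra. Qed.

Lemma Dense_sym {Y} d (Hd : is_metric d) (K : Y -> Prop) g k U V : Dense d K g k U V -> Dense d K g k V U.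
Proof.
  intros H V' U' H1 H2. destruct (H U' V' H2 H1) as [u [v [Ku [Kv [Hu [Hv HD]]]]]].
  exists v, u. split; auto. split; auto. split; auto. split; auto.
  intro N. destruct (HD N) as [n [Hn Hlt]]. exists n. split; auto. rewrite (met_sym d Hd). auto.
Qed.

Lemma Sep_her {Y} d (Hd : is_metric d) (K : Y -> Prop) g s k U V U' V' :
  Sep d K g s k U V -> le_box d K U' U -> le_box d K V' V -> Sep d K g s k U' V'.
Proof.
  intros [n [Hn H]] H1 H2. exists n. split; auto. intros u v Ku Kv Hu Hv. apply H; auto; eapply inb_le; eauto.
Qed.

Lemma process {Y} d (Hd : is_metric d) (K : Y -> Prop) (N : nat)
  (P Q : nat -> nat -> Y * R -> Y * R -> Prop)
  (Pher : forall i j U V U' V', P i j U V -> le_box d K U' U -> le_box d K V' V -> P i j U' V')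
  (Qher : forall i j U V U' V', Q i j U V -> le_box d K U' U -> le_box d K V' V -> Q i j U' V')
  (Qach : forall i j U V, (i < N)%nat -> (j < N)%nat -> i <> j -> valid K U -> valid K V -> P i j U V ->
      exists U' V', le_box d K U' U /\ le_box d K V' V /\ Q i j U' V')
  (T : nat -> Y * R) (HT : forall j, (j < N)%nat -> valid K (T j))
  (HP : forall i j, (i < N)%nat -> (j < N)%nat -> i <> j -> P i j (T i) (T j)) :
  exists T', (forall j, (j < N)%nat -> le_box d K (T' j) (T j)) /\
    forall i j, (i < N)%nat -> (j < N)%nat -> i <> j -> Q i j (T' i) (T' j).
Proof.
  assert (H : forall l : list (nat * nat), exists T', (forall j, (j < N)%nat -> le_box d K (T' j) (T j)) /\
     forall i j, In (i, j) l -> (i < N)%nat -> (j < N)%nat -> i <> j -> Q i j (T' i) (T' j)).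
  { induction l as [|[i j] l IH].
    - exists T. split. intros; apply le_box_refl; auto. intros i j [].
    - destruct IH as [T1 [H1 H2]].
      assert (Hv1 : forall k, (k < N)%nat -> valid K (T1 k)) by (intros; eapply le_box_valid; eauto).
      assert (Hr1 : forall k, (k < N)%nat -> le_box d K (T1 k) (T1 k)) by (intros; apply le_box_refl; auto).
      destruct (classic ((i < N)%nat /\ (j < N)%nat /\ i <> j)) as [[Hi [Hj Hij]]|Hno].
      + destruct (Qach i j (T1 i) (T1 j) Hi Hj Hij (Hv1 i Hi) (Hv1 j Hj)) as [U' [V' [E1 [E2 E3]]]].
        { apply (Pher i j (T i) (T j)); auto. }
        set (T2 := fun k => if Nat.eq_dec k j then V' else if Nat.eq_dec k i then U' else T1 k).
        assert (Hr : forall k, (k < N)%nat -> le_box d K (T2 k) (T1 k)).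
        { intros k Hk. unfold T2. destruct (Nat.eq_dec k j) as [->|]; auto. destruct (Nat.eq_dec k i) as [->|]; auto. }
        assert (Ei : T2 i = U'). { unfold T2. destruct (Nat.eq_dec i j); [lia|]. destruct (Nat.eq_dec i i); [auto|lia]. }
        assert (Ej : T2 j = V'). { unfold T2. destruct (Nat.eq_dec j j); [auto|lia]. }
        exists T2. split.
        * intros k Hk. apply (le_box_trans d Hd K _ (T1 k)); auto.
        * intros i' j' [E|Hin] Hi' Hj' Hij'.
          -- injection E as E4 E5. rewrite <- E4, <- E5, Ei, Ej. auto.
          -- apply (Qher i' j' (T1 i') (T1 j')); auto.
      + exists T1. split; auto. intros i' j' [E|Hin] Hi' Hj' Hij'.
        -- injection E as E4 E5. subst. exfalso; apply Hno; auto.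
        -- apply H2; auto. }
  destruct (H (list_prod (seq 0 N) (seq 0 N))) as [T' [H1 H2]].
  exists T'. split; auto. intros i j Hi Hj Hij. apply H2; auto. apply in_prod; apply in_seq; lia.
Qed.

Lemma sep_ach {Y} d (Hd : is_metric d) (K : Y -> Prop) g (Hg : continuous_map d d g) s k U V :
  valid K U -> valid K V -> Dense d K g k U V ->
  exists U' V', le_box d K U' U /\ le_box d K V' V /\ Sep d K g s k U' V'.
Proof.
  intros HU HV HD.
  destruct (HD (fst U, snd U / 2) (fst V, snd V / 2)) as [u [v [Ku [Kv [Hu [Hv HDk]]]]]].
  { apply le_box_shrink; auto. destruct HU; lra. }
  { apply le_box_shrink; auto. destruct HV; lra. }
  destruct (HDk s) as [n [Hn Hgt]].
  set (D := d (Nat.iter n g u) (Nat.iter n g v)) in *.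
  set (e := (D - / INR (S k)) / 2).
  assert (He : 0 < e) by (unfold e; lra).
  destruct (iter_cont d g Hg n u e He) as [d1 [Hd1 H1]].
  destruct (iter_cont d g Hg n v e He) as [d2 [Hd2 H2]].
  destruct HU as [KU HrU]. destruct HV as [KV HrV]. unfold inb in Hu, Hv; simpl in Hu, Hv.
  set (r1 := Rmin (d1/2) (snd U / 2)). set (r2 := Rmin (d2/2) (snd V / 2)).
  assert (r1a : r1 <= d1/2) by apply Rmin_l. assert (r1b : r1 <= snd U/2) by apply Rmin_r.
  assert (r2a : r2 <= d2/2) by apply Rmin_l. assert (r2b : r2 <= snd V/2) by apply Rmin_r.
  assert (r1p : 0 < r1) by (apply Rmin_glb_lt; lra). assert (r2p : 0 < r2) by (apply Rmin_glb_lt; lra).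
  exists (u, r1), (v, r2). split; [|split].
  - split; [simpl; auto|]. simpl. split; lra.
  - split; [simpl; auto|]. simpl. split; lra.
  - exists n. split; auto. intros u' v' Ku' Kv' Hu' Hv'. unfold inb in Hu', Hv'. simpl in Hu', Hv'.
    specialize (H1 u' ltac:(lra)). specialize (H2 v' ltac:(lra)).
    pose proof (met_tri d Hd (Nat.iter n g u) (Nat.iter n g u') (Nat.iter n g v)).
    pose proof (met_tri d Hd (Nat.iter n g u') (Nat.iter n g v') (Nat.iter n g v)).
    rewrite (met_sym d Hd (Nat.iter n g v') (Nat.iter n g v)) in H0. unfold e in *. unfold D in *. lra.
Qed.

Lemma level_step {Y} d (Hd : is_metric d) (K : Y -> Prop) (HK : compact_subset d K) (Hp : perfect_subset d K)
  (g : Y -> Y) (Hg : continuous_map d d g) (t : nat)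
  (Hcls : forall l, NoDup l -> length l = S t -> (forall y, In y l -> K y) ->
     (forall y z, In y l -> In z l -> Asy d g y z) -> False)
  s L : LInv d K g s L -> exists L', LInv d K g (S s) L' /\ LRel d K s L L'.
Proof.
  destruct L as [T Kf]. intros [I1 I2]. cbn [fst snd] in I1, I2.
  set (eps := / INR (S (S s))).
  assert (HP : forall q, exists w : (Y * R) * (Y * R) * nat, (q < 2 ^ s)%nat ->
     le_box d K (fst (fst w)) (T q) /\ le_box d K (snd (fst w)) (T q) /\ disj d (fst (fst w)) (snd (fst w)) /\
     snd (fst (fst w)) <= eps /\ snd (snd (fst w)) <= eps /\ Dense d K g (snd w) (fst (fst w)) (snd (fst w))).
  { intro q. destruct (Compare_dec.lt_dec q (2 ^ s)) as [Hq|Hq].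
    - destruct (I1 q Hq) as [Hv _].
      destruct (split_box d Hd K Hp (T q) eps Hv) as [B1 [B2 [E1 [E2 [E3 [E4 E5]]]]]]. apply inv_Sk_pos.
      destruct (key d Hd K HK Hp g t Hcls B1 B2) as [k [B1' [B2' [F1 [F2 F3]]]]];
        try (eapply le_box_valid; eauto).
      exists (B1', B2', k). intros _. simpl.
      split. eapply le_box_trans; eauto. split. eapply le_box_trans; eauto. split. eapply disj_her; eauto.
      pose proof (le_box_rad d Hd K _ _ F1). pose proof (le_box_rad d Hd K _ _ F2).
      split. lra. split. lra. auto.
    - exists (T q, T q, 0%nat). intros; lia. }
  destruct (fun_choice _ HP) as [P HPs].
  set (T2 := fun j => if Nat.odd j then snd (fst (P (Nat.div2 j))) else fst (fst (P (Nat.div2 j)))).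
  set (Kf2 := fun i j => if Nat.eq_dec (Nat.div2 i) (Nat.div2 j) then snd (P (Nat.div2 i))
                         else Kf (Nat.div2 i) (Nat.div2 j)).
  assert (Hpar : forall j, (j < 2 ^ S s)%nat -> le_box d K (T2 j) (T (Nat.div2 j)) /\ snd (T2 j) <= eps).
  { intros j Hj. pose proof (div2_lt j s Hj) as Hq. destruct (HPs _ Hq) as [E1 [E2 [_ [E4 [E5 _]]]]].
    unfold T2. destruct (Nat.odd j); auto. }
  assert (Hsib : forall i j, (i < 2 ^ S s)%nat -> (j < 2 ^ S s)%nat -> i <> j -> Nat.div2 i = Nat.div2 j ->
     disj d (T2 i) (T2 j) /\ Dense d K g (Kf2 i j) (T2 i) (T2 j)).
  { intros i j Hi Hj Hij Ed. pose proof (div2_lt i s Hi) as Hq.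
    destruct (HPs _ Hq) as [E1 [E2 [E3 [_ [_ E6]]]]].
    unfold Kf2. destruct (Nat.eq_dec (Nat.div2 i) (Nat.div2 j)) as [_|]; [|lia].
    unfold T2. rewrite <- Ed.
    destruct (par_cases i) as [[Oi Ei]|[Oi Ei]]; destruct (par_cases j) as [[Oj Ej]|[Oj Ej]];
      rewrite Oi, Oj; try lia.
    - split; auto.
    - split. apply disj_sym; auto. apply Dense_sym; auto. }
  assert (Hdisj2 : forall i j, (i < 2 ^ S s)%nat -> (j < 2 ^ S s)%nat -> i <> j -> disj d (T2 i) (T2 j)).
  { intros i j Hi Hj Hij. destruct (Nat.eq_dec (Nat.div2 i) (Nat.div2 j)) as [E|E].
    - apply Hsib; auto.
    - apply (disj_her d Hd K (T (Nat.div2 i)) (T (Nat.div2 j))).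
      apply I2; auto using div2_lt. apply Hpar; auto. apply Hpar; auto. }
  assert (Hdense2 : forall i j, (i < 2 ^ S s)%nat -> (j < 2 ^ S s)%nat -> i <> j ->
     Dense d K g (Kf2 i j) (T2 i) (T2 j)).
  { intros i j Hi Hj Hij. destruct (Nat.eq_dec (Nat.div2 i) (Nat.div2 j)) as [E|E].
    - apply Hsib; auto.
    - unfold Kf2 at 1. destruct (Nat.eq_dec (Nat.div2 i) (Nat.div2 j)); [lia|].
      apply (Dense_her d Hd K g _ (T (Nat.div2 i)) (T (Nat.div2 j))).
      apply I2; auto using div2_lt. apply Hpar; auto. apply Hpar; auto. }
  destruct (process d Hd K (2 ^ S s)
     (fun i j U V => Dense d K g (Kf2 i j) U V) (fun i j U V => Sep d K g (S s) (Kf2 i j) U V))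
     with (T := T2) as [T3 [H31 H32]].
  { intros i j U V U' V' H1 H2 H3. eapply Dense_her; eauto. }
  { intros i j U V U' V' H1 H2 H3. eapply Sep_her; eauto. }
  { intros i j U V Hi Hj Hij HU HV HD. apply sep_ach; auto. }
  { intros j Hj. eapply le_box_valid; apply Hpar; auto. }
  { auto. }
  exists (T3, Kf2). split; [split|split].
  - intros j Hj. cbn [fst snd]. split. eapply le_box_valid; eauto.
    pose proof (le_box_rad d Hd K _ _ (H31 j Hj)). pose proof (proj2 (Hpar j Hj)). unfold eps in *. lra.
  - intros i j Hi Hj Hij. simpl. split; [|split].
    + apply (disj_her d Hd K (T2 i) (T2 j)); auto.
    + apply (Dense_her d Hd K g _ (T2 i) (T2 j)); auto.
    + apply H32; auto.
  - intros q Hq. simpl. rewrite pow2S in *.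
    destruct (odd2 q) as [_ E1]. destruct (odd2S q) as [_ E2].
    split.
    + apply (le_box_trans d Hd K _ (T2 (2 * q)%nat)). apply H31. lia.
      rewrite <- E1 at 2. apply Hpar. lia.
    + apply (le_box_trans d Hd K _ (T2 (S (2 * q)))). apply H31. lia.
      rewrite <- E2 at 2. apply Hpar. lia.
  - intros i j q r Hq Hr Hqr Hi Hj. simpl. unfold Kf2.
    assert (Nat.div2 i = q) by (destruct Hi as [->| ->]; [apply odd2|apply odd2S]).
    assert (Nat.div2 j = r) by (destruct Hj as [->| ->]; [apply odd2|apply odd2S]).
    rewrite H, H0. destruct (Nat.eq_dec q r); [lia|auto].
Qed.

Fixpoint bfl (a : nat -> nat) (s fl k : nat) : nat :=
  match k with
  | 0 => 0
  | S k' => if Compare_dec.le_dec (S k') s then a (S k') else if Nat.eq_dec k' s then fl else (2 * bfl a s fl k')%nat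
  end.

Definition br (a : nat -> nat) := a 0%nat = 0%nat /\ forall s, (a (S s) = 2 * a s \/ a (S s) = S (2 * a s))%nat.

Lemma br_lt a : br a -> forall s, (a s < 2 ^ s)%nat.
Proof.
  intros [H0 H] s. induction s. rewrite H0; simpl; lia. rewrite pow2S. destruct (H s); lia.
Qed.

Lemma cantor_main {Y} d (Hd : is_metric d) (K : Y -> Prop) (HK : compact_subset d K) (Hp : perfect_subset d K)
  (Hne : exists y, K y) (g : Y -> Y) (Hg : continuous_map d d g) (t : nat)
  (Hcls : forall l, NoDup l -> length l = S t -> (forall y, In y l -> K y) ->
     (forall y z, In y l -> In z l -> Asy d g y z) -> False)
  (Hsp : forall y1 y2, K y1 -> K y2 -> y1 <> y2 -> SProx d g y1 y2) :
  exists C : Y -> Prop, (forall y, C y -> K y) /\ cantor_subset d C /\ synd_scrambled d g C.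
Proof.
  destruct Hne as [y0 Ky0].
  destruct (dep_choice (LInv d K g) (LRel d K) ((fun _ => (y0, 1)), (fun _ _ => 0%nat))) as [F [_ HF]].
  { split.
    - intros j Hj. cbn [fst snd]. split. split; cbn [fst snd]; auto; lra.
      replace (INR 1) with 1 by reflexivity. rewrite Rinv_1. lra.
    - intros i j Hi Hj Hij. simpl in Hi, Hj. lia. }
  { intros s a Ha. apply (level_step d Hd K HK Hp g Hg t Hcls); auto. }
  set (T := fun s => fst (F s)). set (Kf := fun s => snd (F s)).
  assert (I1 : forall s j, (j < 2 ^ s)%nat -> valid K (T s j) /\ snd (T s j) <= / INR (S s)).
  { intros s j Hj. apply (proj1 (proj1 (HF s))); auto. }
  assert (I2 : forall s i j, (i < 2 ^ s)%nat -> (j < 2 ^ s)%nat -> i <> j ->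
     disj d (T s i) (T s j) /\ Sep d K g s (Kf s i j) (T s i) (T s j)).
  { intros s i j Hi Hj Hij. destruct (proj2 (proj1 (HF s)) i j Hi Hj Hij) as [A1 [_ A3]]. split; auto. }
  assert (R1 : forall s q, (q < 2 ^ s)%nat -> le_box d K (T (S s) (2 * q)%nat) (T s q) /\
      le_box d K (T (S s) (S (2 * q))) (T s q)).
  { intros s q Hq. apply (proj1 (proj2 (HF s))); auto. }
  assert (R2 : forall s i j q r, (q < 2 ^ s)%nat -> (r < 2 ^ s)%nat -> q <> r ->
      (i = 2 * q \/ i = S (2 * q))%nat -> (j = 2 * r \/ j = S (2 * r))%nat -> Kf (S s) i j = Kf s q r).
  { intros s i j q r. apply (proj2 (proj2 (HF s))). }
  clearbody T Kf.
  assert (br_nest : forall a, br a -> forall s, le_box d K (T (S s) (a (S s))) (T s (a s))).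
  { intros a Ha s. pose proof (br_lt a Ha s). destruct (proj2 Ha s) as [E|E]; rewrite E; apply R1; auto. }
  assert (br_point : forall a, br a -> exists z, K z /\ forall s, inb d (T s (a s)) z).
  { intros a Ha. apply (fip d Hd K HK (fun s => T s (a s))). intro s; apply br_nest; auto.
    apply I1. apply br_lt; auto. }
  assert (uniq : forall s j j' z, (j < 2 ^ s)%nat -> (j' < 2 ^ s)%nat -> inb d (T s j) z -> inb d (T s j') z -> j = j').
  { intros s j j' z Hj Hj' H1 H2. apply NNPP; intro E.
    apply (disj_ne d Hd (T s j) (T s j') z z); auto. apply I2; auto. }
  assert (close : forall a b x y, br a -> br b -> (forall s, inb d (T s (a s)) x) -> (forall s, inb d (T s (b s)) y) ->
     (forall s, a s = b s) -> x = y).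
  { intros a b x y Ha Hb Hx Hy Hab. apply (met_zero_le d Hd). intros e He.
    destruct (archi (e/2)) as [s Hs]; [lra|].
    specialize (Hx s). specialize (Hy s). rewrite <- Hab in Hy. unfold inb in Hx, Hy.
    pose proof (proj2 (I1 s (a s) (br_lt a Ha s))).
    pose proof (met_tri d Hd x (fst (T s (a s))) y). rewrite (met_sym d Hd x (fst (T s (a s)))) in H0. lra. }
  assert (diverge : forall a b x y, br a -> br b -> (forall s, inb d (T s (a s)) x) -> (forall s, inb d (T s (b s)) y) ->
     x <> y -> exists m, a m <> b m).
  { intros a b x y Ha Hb Hx Hy Hxy. apply NNPP; intro H. apply Hxy. apply (close a b x y); auto.
    intro s. apply NNPP; intro H'. apply H; eauto. }
  assert (par_inb : forall s j z, (j < 2 ^ S s)%nat -> inb d (T (S s) j) z -> inb d (T s (Nat.div2 j)) z).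
  { intros s j z Hj H. pose proof (div2_lt j s Hj) as Hq.
    destruct (par_cases j) as [[_ E]|[_ E]]; remember (Nat.div2 j) as q; subst j;
      eapply inb_le; eauto; apply R1; auto. }
  set (C := fun z => K z /\ exists a, br a /\ forall s, inb d (T s (a s)) z).
  assert (Hcomp : compact_subset d C).
  { intros I U HU Hcov.
    set (O := fun s z => forall j, (j < 2 ^ s)%nat -> snd (T s j) < d (fst (T s j)) z).
    assert (HO : forall s, Defs.open_set d (O s)).
    { intros s z Hz.
      destruct (nat_min (2 ^ s) (fun j e => forall w, d z w < e -> snd (T s j) < d (fst (T s j)) w)) as [e [He He2]].
      { intros j e e' H1 H2 w Hw. apply H1. lra. }
      { intros j Hj. exists (d (fst (T s j)) z - snd (T s j)). split. specialize (Hz j Hj); lra.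
        intros w Hw. pose proof (met_tri d Hd (fst (T s j)) w z). rewrite (met_sym d Hd w z) in H. lra. }
      exists e. split; auto. intros w Hw j Hj. apply He2; auto. }
    assert (HKC : forall z, K z -> C z \/ exists s, O s z).
    { intros z Kz. destruct (classic (exists s, O s z)) as [H|H]; [right; auto|left].
      assert (Hall : forall s, exists j, (j < 2 ^ s)%nat /\ inb d (T s j) z).
      { intro s. apply NNPP; intro H1. apply H. exists s. intros j Hj. apply Rnot_le_lt. intro H2.
        apply H1. exists j; split; auto. }
      destruct (fun_choice _ Hall) as [a Ha].
      split; auto. exists a. split; [split|].
      - destruct (Ha 0%nat) as [H0 _]. simpl in H0. lia.
      - intro s. destruct (Ha (S s)) as [H1 H2].
        assert (Hq : Nat.div2 (a (S s)) = a s).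
        { apply (uniq s _ _ z). apply div2_lt; auto. apply Ha. apply par_inb; auto. apply Ha. }
        destruct (par_cases (a (S s))) as [[_ E]|[_ E]]; rewrite Hq in E; auto.
      - intro s. apply Ha. }
    destruct (HK (I + nat)%type (fun e => match e with inl i => U i | inr s => O s end)) as [l Hl].
    { intros [i|s]. apply HU. apply HO. }
    { intros z Kz. destruct (HKC z Kz) as [Hc|[s Hs]].
      destruct (Hcov z Hc) as [i Hi]. exists (inl i); auto. exists (inr s); auto. }
    exists (flat_map (fun e => match e with inl i => [i] | inr _ => [] end) l).
    intros z Hz. destruct (Hl z (proj1 Hz)) as [[i|s] [H1 H2]].
    - exists i. split; auto. apply in_flat_map. exists (inl i). simpl; auto.
    - exfalso. destruct Hz as [_ [a [Ha Hin]]]. specialize (H2 (a s) (br_lt a Ha s)).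
      specialize (Hin s). unfold inb in Hin. lra. }
  assert (Hperf : perfect_subset d C).
  { intros x [Kx [a [Ha Hx]]] e He.
    destruct (archi (e/2)) as [s Hs]; [lra|].
    set (fl := if Nat.eq_dec (a (S s)) (2 * a s)%nat then S (2 * a s) else (2 * a s)%nat).
    set (b := bfl a s fl).
    assert (Hb1 : forall k, (k <= s)%nat -> b k = a k).
    { intros [|k] Hk. simpl; destruct Ha as [H0 _]; auto. unfold b; simpl.
      destruct (Compare_dec.le_dec (S k) s); [auto|lia]. }
    assert (Hb2 : b (S s) = fl).
    { unfold b; simpl. destruct (Compare_dec.le_dec (S s) s); [lia|]. destruct (Nat.eq_dec s s); [auto|lia]. }
    assert (Hfl : fl <> a (S s) /\ (fl = 2 * a s \/ fl = S (2 * a s))%nat).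
    { unfold fl. destruct (proj2 Ha s); destruct (Nat.eq_dec (a (S s)) (2 * a s)); lia. }
    assert (Hbr : br b).
    { split. reflexivity. intro k. destruct (Compare_dec.lt_eq_lt_dec k s) as [[Hk|Hk]|Hk].
      - rewrite !Hb1 by lia. apply Ha.
      - subst k. rewrite Hb2, Hb1 by lia. apply Hfl.
      - unfold b; simpl. destruct (Compare_dec.le_dec (S k) s); [lia|]. destruct (Nat.eq_dec k s); [lia|]. left; auto. }
    destruct (br_point b Hbr) as [y [Ky Hy]].
    exists y. split. split; auto. exists b; auto. split.
    - intro E. subst y. specialize (Hy (S s)). specialize (Hx (S s)). rewrite Hb2 in Hy.
      apply (disj_ne d Hd (T (S s) (a (S s))) (T (S s) fl) x x); auto. apply I2.
      apply br_lt; auto. rewrite <- Hb2. apply br_lt; auto. apply not_eq_sym, Hfl.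
    - specialize (Hy s). specialize (Hx s). rewrite Hb1 in Hy by lia. unfold inb in Hx, Hy.
      pose proof (proj2 (I1 s (a s) (br_lt a Ha s))).
      pose proof (met_tri d Hd x (fst (T s (a s))) y). rewrite (met_sym d Hd x (fst (T s (a s)))) in H0. lra. }
  assert (Htd : totally_disconnected_subset d C).
  { intros C' HC' Hconn x y Hx Hy. apply NNPP; intro Hxy.
    destruct (HC' x Hx) as [_ [a [Ha Hxa]]]. destruct (HC' y Hy) as [_ [b [Hb Hyb]]].
    destruct (diverge a b x y Ha Hb Hxa Hyb Hxy) as [m Hm].
    destruct (nat_min (2 ^ m) (fun j e => j <> a m -> forall w, inb d (T m j) w ->
        snd (T m (a m)) + e < d (fst (T m (a m))) w)) as [del [Hdel Hdel2]].
    { intros j e e' H1 H2 Hj w Hw. specialize (H1 Hj w Hw). lra. }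
    { intros j Hj. destruct (Nat.eq_dec j (a m)) as [E|E].
      - exists 1. split. lra. intro; contradiction.
      - pose proof (proj1 (I2 m (a m) j (br_lt a Ha m) Hj (not_eq_sym E))) as Hdj. unfold disj in Hdj.
        exists ((d (fst (T m (a m))) (fst (T m j)) - snd (T m (a m)) - snd (T m j)) / 2). split. lra.
        intros _ w Hw. unfold inb in Hw. pose proof (met_tri d Hd (fst (T m (a m))) w (fst (T m j))).
        rewrite (met_sym d Hd w) in H. lra. }
    apply Hconn. exists (fun w => d (fst (T m (a m))) w < snd (T m (a m)) + del),
      (fun w => snd (T m (a m)) + del < d (fst (T m (a m))) w).
    split. apply open_ball; auto. split. apply open_out; auto. split; [|split; [|split]].
    - intros w Hw. destruct (HC' w Hw) as [_ [c [Hc Hwc]]]. destruct (Nat.eq_dec (c m) (a m)) as [E|E].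
      + left. specialize (Hwc m). rewrite E in Hwc. unfold inb in Hwc. lra.
      + right. apply (Hdel2 (c m)); auto. apply br_lt; auto.
    - exists x. split; auto. specialize (Hxa m). unfold inb in Hxa. lra.
    - exists y. split; auto. apply (Hdel2 (b m)); auto. apply br_lt; auto.
    - intros w _ H1 H2. lra. }
  assert (Hne : exists x, C x).
  { destruct (br_point (fun _ => 0%nat)) as [z [Kz Hz]].
    { split; [reflexivity| intro s; left; lia]. }
    exists z. split; auto. exists (fun _ => 0%nat); split; auto. split; [reflexivity| intro s; left; lia]. }
  exists C. split. intros y [Ky _]; auto. split. split; auto. split.
  - destruct Hne as [x Hx]. destruct (Hperf x Hx 1 ltac:(lra)) as [y [Hy [Hyx _]]].
    exists x, y. split; auto.
  - intros x y Hx Hy Hxy. split. apply Hsp; auto. apply Hx. apply Hy.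
    intro HA. destruct Hx as [Kx [a [Ha Hxa]]]. destruct Hy as [Ky [b [Hb Hyb]]].
    destruct (diverge a b x y Ha Hb Hxa Hyb Hxy) as [m Hm].
    assert (Hdiv : forall s, (m <= s)%nat -> a s <> b s).
    { intros s Hs. induction Hs; auto. intro E. apply IHHs. destruct (proj2 Ha m0), (proj2 Hb m0); lia. }
    assert (Hk : forall s, (m <= s)%nat -> Kf s (a s) (b s) = Kf m (a m) (b m)).
    { intros s Hs. induction Hs; auto. rewrite <- IHHs. apply R2.
      apply br_lt; auto. apply br_lt; auto. apply Hdiv; auto. apply Ha. apply Hb. }
    destruct (HA (/ INR (S (Kf m (a m) (b m)))) (inv_Sk_pos _)) as [N HN].
    destruct (proj2 (I2 (N + m)%nat (a (N + m)%nat) (b (N + m)%nat) (br_lt a Ha _) (br_lt b Hb _)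
       (Hdiv (N + m)%nat ltac:(lia)))) as [n [Hn Hsep]].
    rewrite Hk in Hsep by lia.
    specialize (Hsep x y Kx Ky (Hxa _) (Hyb _)). specialize (HN n ltac:(lia)). lra.
Qed.

Lemma image_perfect {X Y} (dX : X -> X -> R) (dY : Y -> Y -> R) (HdX : is_metric dX) (HdY : is_metric dY)
  (p : X -> Y) (t : nat) (Hpc : continuous_map dX dY p) (Hfib : fibers_bounded p t) (Sc : X -> Prop) :
  perfect_subset dX Sc -> perfect_subset dY (image p Sc).
Proof.
  intros Hper y [x [Hx <-]] e He. apply NNPP; intro Hn.
  destruct (Hpc x e He) as [del [Hdel Hd]].
  assert (H : forall m, exists l rho, NoDup l /\ length l = m /\ 0 < rho /\
     (forall z, In z l -> Sc z /\ dX x z < del /\ rho <= dX x z)).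
  { induction m as [|m IH].
    - exists [], del. split. constructor. split. auto. split. auto. intros z [].
    - destruct IH as [l [rho [H1 [H2 [H3 H4]]]]].
      destruct (Hper x Hx (Rmin del rho)) as [z [Hz [Hzx Hdz]]]. apply Rmin_glb_lt; auto.
      pose proof (Rmin_l del rho). pose proof (Rmin_r del rho).
      pose proof (met_neq dX HdX x z (fun E => Hzx (eq_sym E))).
      exists (z :: l), (dX x z). split; [|split; [|split]].
      + constructor; auto. intro Hin. specialize (H4 z Hin). lra.
      + simpl; auto.
      + auto.
      + intros w [<-|Hw]. split; auto. split; lra. specialize (H4 w Hw). split; [apply H4|]. split; [apply H4|]. lra. }
  destruct (H (S t)) as [l [rho [Hnd [Hl [_ Hz]]]]].
  assert (length l <= t)%nat; [|lia]. apply (Hfib (p x) l Hnd).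
  intros z Hzl. destruct (Hz z Hzl) as [Sz [Hdz _]]. apply NNPP; intro Hne. apply Hn.
  exists (p z). split. exists z; auto. split; auto. 
Qed.

Theorem proposition3p17
  (X Y : Type) (dX : X -> X -> R) (dY : Y -> Y -> R)
  (HdX : is_metric dX) (HdY : is_metric dY)
  (HcX : compact_space dX) (HcY : compact_space dY)
  (f : X -> X) (g : Y -> Y)
  (Hf : continuous_map dX dX f) (Hg : continuous_map dY dY g)
  (t : nat) (p : X -> Y)
  (Hp : factor_map dX dY f g p)
  (Hfib : fibers_bounded p t)
  (Sc : X -> Prop)
  (HSunc : uncountable_subset Sc)
  (HSscr : synd_scrambled dX f Sc)
  (HSsep : forall l : list X, NoDup l -> length l = (t + 1)%nat ->
      (forall x, In x l -> Sc x) ->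
      exists eps, 0 < eps /\ exists M : nat -> Prop, infinite_nat_set M /\
        forall n, M n -> forall x y, In x l -> In y l -> x <> y ->
          eps <= dX (Nat.iter n f x) (Nat.iter n f y)) :
  (exists S' : Y -> Prop, (forall y, S' y -> image p Sc y) /\
     uncountable_subset S' /\ synd_scrambled dY g S') /\
  (cantor_subset dX Sc ->
   exists S' : Y -> Prop, (forall y, S' y -> image p Sc y) /\
     cantor_subset dY S' /\ synd_scrambled dY g S').
Proof.
  destruct Hp as [Hpc [Hsurj Hcomm]].
  assert (Hcls : forall l, NoDup l -> (forall x, In x l -> Sc x) ->
     (forall x y, In x l -> In y l -> Asy dY g (p x) (p y)) -> (length l <= t)%nat).
  { intros l Hn HS HA. destruct (Compare_dec.le_lt_dec (length l) t) as [|Hlt]; auto. exfalso.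
    destruct (sub_nodup l (S t) Hn Hlt) as [l' [Hn' [Hl' Hi]]].
    apply (fact dX dY HdX HdY HcX f g p t Hpc Hcomm Hfib l' Hn' Hl').
    - apply HSsep; auto. rewrite Hl'. lia.
    - intros x y Hx Hy. apply HA; auto. }
  split.
  - apply (part1 dX dY HdX HdY HcX f g p t Hpc Hcomm Hfib Sc HSunc HSscr Hcls).
  - intros [Hne [Hcomp [Hper Htd]]].
    destruct Hne as [x0 Hx0].
    assert (Hpre : forall y, exists x, image p Sc y -> Sc x /\ p x = y).
    { intro y. destruct (classic (image p Sc y)) as [[x [Hx E]]|H]. exists x; auto. exists x0; intro; contradiction. }
    destruct (fun_choice _ Hpre) as [pre Hpre2].
    destruct (cantor_main dY HdY (image p Sc) (image_compact dX dY p Sc Hpc Hcomp)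
       (image_perfect dX dY HdX HdY p t Hpc Hfib Sc Hper) (ex_intro _ (p x0) (ex_intro _ x0 (conj Hx0 eq_refl)))
       g Hg t) as [C [HC1 [HC2 HC3]]].
    + intros l Hn Hl HK HA.
      assert (length (map pre l) <= t)%nat; [|rewrite length_map in H; lia].
      apply Hcls.
      * apply NoDup_map_inj_on; auto. intros y z Hy Hz E.
        rewrite <- (proj2 (Hpre2 y (HK y Hy))), <- (proj2 (Hpre2 z (HK z Hz))), E. auto.
      * intros x Hx. apply in_map_iff in Hx. destruct Hx as [y [<- Hy]]. apply Hpre2; auto.
      * intros x x' Hx Hx'. apply in_map_iff in Hx, Hx'. destruct Hx as [y [<- Hy]]. destruct Hx' as [z [<- Hz]].
        rewrite (proj2 (Hpre2 y (HK y Hy))), (proj2 (Hpre2 z (HK z Hz))). auto.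
    + intros y1 y2 [x1 [Hx1 <-]] [x2 [Hx2 <-]] Hne.
      apply (sprox_transfer dX dY HdX HdY HcX f g p Hpc Hcomm). apply HSscr; auto.
      intro E; subst; auto.
    + exists C. split; auto.
Qed.
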